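(* Let $G$ be a digraph and $v\to w\in E(G)$. Then $v\to w$ is disimplicial in $G$ if and only if $(\mathrm{repr}(\mathrm{out}(v)),\mathrm{repr}(\mathrm{in}(w)))$ is a vertex of $\mathrm{Join}(\mathrm{Repr}(\mathrm{Split}(G)))$ and this vertex is transitive there.
   Context: A digraph is a finite vertex set $V$ with arc set $E\subseteq V\times V$. $N^+(v),N^-(v)$ denote out-/in-neighborhoods, $N(v)=N^+(v)\cup N^-(v)$, $d(v)=|N(v)|$. Source: $N^-(v)=\emptyset$; sink: $N^+(v)=\emptyset$; ST graph: every vertex is a source or a sink. An arc $v\to w$ is disimplicial if $x\to y$ is an arc for all $x\in N^-(w)$, $y\in N^+(v)$; a vertex $u$ is transitive if $x\to y$ is an arc for all $x\in N^-(u)$, $y\in N^+(u)$. $\mathrm{Split}(G)$ is the ST graph with a vertex $\mathrm{out}(v)$ for each non-sink $v$ of $G$ and a vertex $\mathrm{in}(w)$ for each non-source $w$ (all distinct), $\mathrm{out}(v)\to\mathrm{in}(w)$ an arc iff $v\to w\in E(G)$, no other arcs. In an ST graph $H$, vertices with equal $N(\cdot)$ are twins; twin blocks are the classes of this equivalence; $\mathrm{repr}$ picks one vertex of each block ($\mathrm{repr}(u)$ is the chosen vertex of $u$'s block), and $\mathrm{Repr}(H)$ is the subdigraph induced by the chosen vertices. In a digraph $H$, the thin neighbor $\theta(u)$ of $u$ is the unique $x\in N(u)$ with $d(x)<d(z)$ for all $z\in N(u)\setminus\{x\}$ (undefined if no such $x$); an arc $a\to b$ is thin if $\theta(a)=b$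 and $\theta(b)=a$. The thin arcs form a matching (no two share an endpoint). For a matching $M$ with endpoint set $V(M)$, $\mathrm{Join}(H,M)$ has a vertex $(u,u)$ for each $u\notin V(M)$ and a vertex $(a,b)$ for each $a\to b\in M$, with $(a,b)\to(x,y)$ an arc iff $a\to y\in E(H)$. $\mathrm{Join}(H)$ denotes $\mathrm{Join}(H,M)$ for $M$ the set of thin arcs of $H$. *)

(* Defs.v *)
From HB Require Import structures.
From mathcomp Require Import all_boot.
Set Implicit Arguments. Unset Strict Implicit. Unset Printing Implicit Defensive.

Record digraph := Digraph { vert : finType; edge : rel vert }.

Section Defs.
Variable G : digraph.

Definition outN (v : vert G) : {set vert G} := [set y | edge v y].
Definition inN (v : vert G) : {set vert G} := [set x | edge x v].
Definition nbhd (v : vert G) : {set vert G} := outN v :|: inN v.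
Definition deg (v : vert G) : nat := #|nbhd v|.

Definition is_source (v : vert G) : bool := inN v == set0.
Definition is_sink (v : vert G) : bool := outN v == set0.

Definition disimplicial (v w : vert G) : Prop :=
  forall x y, x \in inN w -> y \in outN v -> edge x y.

Definition transitive_vertex (u : vert G) : Prop :=
  forall x y, x \in inN u -> y \in outN u -> edge x y.

Definition thin_nb (u x : vert G) : bool :=
  (x \in nbhd u) && [forall z in nbhd u, (z != x) ==> (deg x < deg z)].

Definition thin_arc (a b : vert G) : bool :=
  [&& edge a b, thin_nb a b & thin_nb b a].

Definition in_thin_matching (u : vert G) : bool :=
  [exists x, thin_arc u x || thin_arc x u].

(* Twin-block representative functions on a digraph (used on ST graphs):
   r picks, for each vertex, a vertex of its twin block (same N),
   and the choice depends only on the block. *)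
Definition is_repr (r : vert G -> vert G) : Prop :=
  (forall u, nbhd (r u) = nbhd u) /\
  (forall u u', nbhd u = nbhd u' -> r u = r u').

End Defs.

(* DSplit(G): vertices out(v) = inl v for non-sinks v, in(w) = inr w for
   non-sources w; arcs out(v) -> in(w) iff v -> w. *)
Definition split_ok (G : digraph) (x : vert G + vert G) : bool :=
  match x with inl v => ~~ is_sink v | inr w => ~~ is_source w end.

Definition split_vert (G : digraph) := {x : vert G + vert G | split_ok x}.

Definition split_arc (G : digraph) : rel (split_vert G) :=
  fun a b => match val a, val b with
             | inl v, inr w => edge v w
             | _, _ => false
             end.

Definition DSplit (G : digraph) : digraph := @Digraph (split_vert G) (@split_arc G).

Definition repr_vert (H : digraph) (r : vert H -> vert H) := {u : vert H | r u == u}.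

Definition DRepr (H : digraph) (r : vert H -> vert H) : digraph :=
  @Digraph (repr_vert r) (fun a b => edge (val a) (val b)).

(* DJoin(H) = DJoin(H, M) with M the set of thin arcs of H. Vertices are the
   pairs (u,u) with u not in V(M) and the pairs (a,b) with a -> b in M. *)
Definition join_ok (H : digraph) (p : vert H * vert H) : bool :=
  ((p.1 == p.2) && ~~ in_thin_matching p.1) || thin_arc p.1 p.2.

Definition join_vert (H : digraph) := {p : vert H * vert H | join_ok p}.

Definition DJoin (H : digraph) : digraph :=
  @Digraph (join_vert H) (fun p q => edge (val p).1 (val q).2).

(* Main.v *)
Require Import Defs.
From HB Require Import structures.
From mathcomp Require Import all_boot.
Set Implicit Arguments. Unset Strict Implicit. Unset Printing Implicit Defensive.

Section Gen.
Variable H : digraph.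
Variable r : vert H -> vert H.
Hypothesis hr : is_repr r.

Lemma nbhdC (a b : vert H) : (a \in nbhd b) = (b \in nbhd a).
Proof. by rewrite /nbhd /outN /inN !inE orbC. Qed.

Lemma nbhd_r a b : (a \in nbhd (r b)) = (a \in nbhd b).
Proof. by rewrite hr.1. Qed.

Lemma r_nbhd a b : (r a \in nbhd b) = (a \in nbhd b).
Proof. by rewrite nbhdC nbhd_r nbhdC. Qed.

Lemma rr a : r (r a) = r a.
Proof. apply: hr.2; apply: hr.1. Qed.

Definition rep a : repr_vert r := exist _ (r a) (introT eqP (rr a)).

Lemma nbhdR (c d : vert (DRepr r)) : (d \in nbhd c) = (val d \in nbhd (val c)).
Proof. by rewrite /nbhd /outN /inN !inE. Qed.

Lemma degR_lt (c d : vert (DRepr r)) :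
  nbhd (val c) \proper nbhd (val d) -> deg c < deg d.
Proof.
move=> Hp; apply: proper_card; apply/properP; split.
  apply/subsetP => x; rewrite !nbhdR; apply: (subsetP (proper_sub Hp)).
have [_ [u hu hnu]] := properP Hp.
exists (rep u); by rewrite nbhdR /= r_nbhd.
Qed.

Lemma thin_gen a b : b \in nbhd a ->
  (forall z, z \in nbhd a -> nbhd b \subset nbhd z) ->
  thin_nb (rep a : vert (DRepr r)) (rep b).
Proof.
move=> hab hsub; rewrite /thin_nb nbhdR /= nbhd_r r_nbhd hab /=.
apply/forall_inP => z; rewrite nbhdR /= nbhd_r => hz.
apply/implyP => hzb; apply: degR_lt => /=.
rewrite hr.1 properEneq hsub // andbT.
apply/eqP => E; move/eqP: hzb; apply; apply: val_inj => /=.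
have := proj2 hr _ _ E; have := valP z; move/eqP => ->; by [].
Qed.

End Gen.

Section Split.
Variable G : digraph.

Definition side (x : vert (DSplit G)) : bool :=
  if val x is inl _ then true else false.

Lemma split_adj (c d : vert (DSplit G)) : d \in nbhd c -> side c != side d.
Proof.
by case: c d => [[x|x] ?] [[y|y] ?]; rewrite /nbhd /outN /inN !inE /= /split_arc /side /=.
Qed.

Lemma split_arcE (c d : vert (DSplit G)) : side c -> ~~ side d ->
  split_arc c d = (d \in nbhd c).
Proof.
by case: c d => [[x|x] ?] [[y|y] ?]; rewrite /nbhd /outN /inN !inE /= /split_arc /side /= ?orbF.
Qed.

Lemma split_nonempty (u : vert (DSplit G)) : exists c, c \in nbhd u.
Proof.
case: u => [[x|x] ok].
  have := ok; rewrite /split_ok /is_sink /is_source => /set0Pn [y hy].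
  have oky : split_ok (inr y : vert G + vert G).
    by apply/set0Pn; exists x; move: hy; rewrite !inE.
  exists (exist _ (inr y) oky).
  by rewrite /nbhd /outN /inN !inE /= /split_arc /=; move: hy; rewrite inE => ->.
have := ok; rewrite /split_ok /is_sink /is_source => /set0Pn [y hy].
have oky : split_ok (inl y : vert G + vert G).
  by apply/set0Pn; exists x; move: hy; rewrite !inE.
exists (exist _ (inl y) oky).
by rewrite /nbhd /outN /inN !inE /= /split_arc /=; move: hy; rewrite inE => ->.
Qed.

Lemma side_r (r : vert (DSplit G) -> vert (DSplit G)) (hr : is_repr r) u :
  side (r u) = side u.
Proof.
have [c hc] := split_nonempty u.
have h1 := split_adj hc.
have h2 : c \in nbhd (r u) by rewrite nbhd_r.
move: h1 (split_adj h2).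
by case: (side (r u)) (side u) (side c) => [] [] [].
Qed.

End Split.

Lemma split_arc_side G (c d : vert (DSplit G)) : split_arc c d -> side c && ~~ side d.
Proof. by case: c d => [[x|x] ?] [[y|y] ?]; rewrite /split_arc /side /=. Qed.

Theorem theorem9 (G : digraph) (v w : vert G) (vw : edge v w)
    (r : vert (DSplit G) -> vert (DSplit G)) (hr : is_repr r)
    (s t : vert (DSplit G)) (hs : val s = inl v) (ht : val t = inr w) :
  disimplicial v w <->
  exists p : vert (DJoin (DRepr r)),
    (val (val p).1, val (val p).2) = (r s, r t) /\ transitive_vertex p.
Proof.
have ss : side s = true by rewrite /side hs.
have st : side t = false by rewrite /side ht.
split.
- move=> hd.
  have hst : t \in nbhd s.
    by rewrite -split_arcE ?st // /split_arc hs ht.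
  have hsubs : forall z, z \in nbhd s -> nbhd t \subset nbhd z.
    case=> [[y0|y0] okz] hz.
      by move: (split_adj hz); rewrite ss.
    rewrite -split_arcE ?ss // /split_arc hs /= in hz.
    apply/subsetP; case=> [[x0|x0] oku] hu; last first.
      by move: (split_adj hu); rewrite st.
    rewrite nbhdC -split_arcE ?st // /split_arc ht /= in hu.
    rewrite nbhdC -split_arcE // /split_arc /=.
    by apply: hd; rewrite inE.
  have hsubt : forall z, z \in nbhd t -> nbhd s \subset nbhd z.
    case=> [[x0|x0] okz] hz; last first.
      by move: (split_adj hz); rewrite st.
    rewrite nbhdC -split_arcE ?st // /split_arc ht /= in hz.
    apply/subsetP; case=> [[y0|y0] oku] hu.
      by move: (split_adj hu); rewrite ss.
    rewrite -split_arcE ?ss // /split_arc hs /= in hu.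
    rewrite -split_arcE // /split_arc /=.
    by apply: hd; rewrite inE.
  have thAB : thin_arc (rep hr s : vert (DRepr r)) (rep hr t).
    apply/and3P; split.
    + rewrite /= split_arcE ?side_r ?ss ?st //.
      by rewrite nbhd_r // r_nbhd.
    + by apply: thin_gen.
    + by apply: thin_gen => //; rewrite nbhdC.
  have okp : join_ok ((rep hr s : vert (DRepr r)), (rep hr t : vert (DRepr r))).
    by rewrite /join_ok /= thAB orbT.
  exists (exist (@join_ok _) _ okp : join_vert (DRepr r)); split; first by [].
  move=> q q'; rewrite !inE /=.
  move: (val (val q).1) (val (val q').2) => c d hq hq'.
  case: c hq => [[x0|x0] okc] hq; last by move: hq; rewrite /split_arc.
  case: d hq' => [[y0|y0] okd] hq'; first by move: hq'; rewrite /split_arc; case: (val (r s)).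
  rewrite split_arcE ?side_r ?st // r_nbhd // nbhdC in hq.
  rewrite nbhdC -split_arcE ?st // /split_arc ht /= in hq.
  rewrite split_arcE ?side_r ?ss // nbhd_r // in hq'.
  rewrite -split_arcE ?ss // /split_arc hs /= in hq'.
  rewrite /split_arc /=.
  by apply: hd; rewrite inE.
- case=> p [hpv htr] x y hx hy.
  rewrite inE in hx; rewrite inE in hy.
  case: hpv => h1 h2.
  have okX : split_ok (inl x : vert G + vert G).
    by apply/set0Pn; exists w; rewrite inE.
  have okY : split_ok (inr y : vert G + vert G).
    by apply/set0Pn; exists v; rewrite inE.
  pose X := (exist (@split_ok G) _ okX : vert (DSplit G)).
  pose Y := (exist (@split_ok G) _ okY : vert (DSplit G)).
  have sX : side (r X) = true by rewrite side_r.
  have sY : side (r Y) = false by rewrite side_r.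
  have [q hq1] : exists q : join_vert (DRepr r), (val q).1 = rep hr X.
    case hm: (in_thin_matching (rep hr X : vert (DRepr r))).
      move/existsP: hm => [z /orP [hz|hz]].
        have ok : join_ok ((rep hr X : vert (DRepr r)), z) by rewrite /join_ok /= hz orbT.
        by exists (exist (@join_ok _) _ ok).
      move: hz => /and3P [he _ _].
      by move: (split_arc_side he); rewrite /= sX andbF.
    have ok : join_ok ((rep hr X : vert (DRepr r)), (rep hr X : vert (DRepr r))).
      by rewrite /join_ok /= eqxx hm.
    by exists (exist (@join_ok _) _ ok).
  have [q' hq2] : exists q : join_vert (DRepr r), (val q).2 = rep hr Y.
    case hm: (in_thin_matching (rep hr Y : vert (DRepr r))).
      move/existsP: hm => [z /orP [hz|hz]].
        move: hz => /and3P [he _ _].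
        by move: (split_arc_side he); rewrite /= sY.
      have ok : join_ok (z, (rep hr Y : vert (DRepr r))) by rewrite /join_ok /= hz orbT.
      by exists (exist (@join_ok _) _ ok).
    have ok : join_ok ((rep hr Y : vert (DRepr r)), (rep hr Y : vert (DRepr r))).
      by rewrite /join_ok /= eqxx hm.
    by exists (exist (@join_ok _) _ ok).
  have e1 : q \in inN p.
    rewrite inE /= hq1 h2 /= split_arcE ?sX ?side_r ?st //.
    rewrite nbhd_r // r_nbhd // -split_arcE ?st //.
    by rewrite /split_arc ht /=.
  have e2 : q' \in outN p.
    rewrite inE /= hq2 h1 /= split_arcE ?sY ?side_r ?ss //.
    rewrite nbhd_r // r_nbhd // -split_arcE ?ss //.
    by rewrite /split_arc hs /=.
  have := htr _ _ e1 e2.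
  rewrite /= hq1 hq2 /= split_arcE ?sX ?sY // nbhd_r // r_nbhd // -split_arcE //.
Qed.
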